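(* In the setting below, if $\{\mathbb G(t)\}$ is uniformly strongly connected, then for every fixed $\tau\ge0$, $S(t)\cdots S(\tau+1)S(\tau)\to\frac1n\mathbf 1\,y^\top(\tau)$ as $t\to\infty$, where $y(\tau)=(y_1(\tau),\dots,y_n(\tau))^\top$ and $\mathbf 1$ is the all-ones vector.
   Context: Setting. Fix $n$ agents, $\mathcal V=\{1,\dots,n\}$. For each $t\in\{0,1,2,\dots\}$, $\mathbb G(t)=(\mathcal V,\mathcal E(t))$ is a directed graph containing a self-arc $(i,i)$ at every vertex; $\mathcal N_i(t)=\{j:(j,i)\in\mathcal E(t)\}$ and $\mathcal N_i^-(t)=\{k:(i,k)\in\mathcal E(t)\}$. Weights $w_{ij}(t)$ are positive for $j\in\mathcal N_i(t)$ and $w_{ij}(t)=0$ otherwise, and satisfy: there is $\beta>0$ with $w_{ij}(t)\ge\beta$ whenever $j\in\mathcal N_i(t)$, and $\sum_{j\in\mathcal N_i^-(t)}w_{ji}(t)=1$ for all $i,t$. Thus $W(t)=[w_{ij}(t)]$ is column stochastic with positive diagonal. The sequence $\{\mathbb G(t)\}$ is uniformly strongly connected if there is a positive integer $L$ such that for every $t\ge0$ the directed graph with vertex set $\mathcal V$ and edge set $\bigcup_{k=t}^{t+L-1}\mathcal E(k)$ is strongly connected. The $y$-iteration of push-sum: $y_i(t+1)=\sum_{j}w_{ij}(t)y_j(t)$, $y_i(0)=1$. Define $S(t)$ with entries $s_{ij}(t)=w_{ij}(t)y_j(t)/y_i(t+1)$. *)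

(* Defs.v *)
From HB Require Import structures.
From mathcomp Require Import all_boot all_order all_algebra.
From mathcomp Require Import all_classical all_reals all_analysis.
Set Implicit Arguments. Unset Strict Implicit. Unset Printing Implicit Defensive.
Import Order.TTheory GRing.Theory Num.Theory.
Local Open Scope ring_scope.

(* Edge sets: E t j i  means  (j,i) \in E(t), i.e. j is an in-neighbour of i. *)

Definition union_rel (n : nat) (E : nat -> rel 'I_n) (t L : nat) : rel 'I_n :=
  fun a b => [exists k : 'I_L, E (t + k)%N a b].

Definition strongly_connected (n : nat) (e : rel 'I_n) : Prop :=
  forall i j : 'I_n, connect e i j.

Definition uniformly_strongly_connected (n : nat) (E : nat -> rel 'I_n) : Prop :=
  exists L : nat, (0 < L)%N /\ forall t, strongly_connected (union_rel E t L).

Fixpoint ypush (R : realType) (n : nat) (W : nat -> 'M[R]_n) (t : nat) : 'cV[R]_n :=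
  match t with
  | 0 => const_mx 1
  | t'.+1 => W t' *m ypush W t'
  end.

Definition Smat (R : realType) (n : nat) (W : nat -> 'M[R]_n) (t : nat) : 'M[R]_n :=
  \matrix_(i, j) (W t i j * ypush W t j ord0 / ypush W t.+1 i ord0).

(* Sprod W tau k = S(tau+k) ... S(tau+1) S(tau) *)
Fixpoint Sprod (R : realType) (n : nat) (W : nat -> 'M[R]_n) (tau k : nat) : 'M[R]_n :=
  match k with
  | 0 => Smat W tau
  | k'.+1 => Smat W (tau + k'.+1)%N *m Sprod W tau k'
  end.

(* Main.v *)
Require Import Defs.
From HB Require Import structures.
From mathcomp Require Import all_boot all_order all_algebra.
From mathcomp Require Import all_classical all_reals all_analysis.
From mathcomp Require Import zify ring lra.
Import Order.TTheory GRing.Theory Num.Theory numFieldNormedType.Exports.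
Set Implicit Arguments. Unset Strict Implicit. Unset Printing Implicit Defensive.
Local Open Scope ring_scope.

Fixpoint Pm (R : realType) (n : nat) (W : nat -> 'M[R]_n) (s k : nat) : 'M[R]_n :=
  match k with 0 => 1%:M | k'.+1 => W (s + k')%N *m Pm W s k' end.

Lemma PmS (R : realType) n (W : nat -> 'M[R]_n) s k :
  Pm W s k.+1 = W (s + k)%N *m Pm W s k.
Proof. by []. Qed.

Lemma Pm_ge0 (R : realType) n (W : nat -> 'M[R]_n) :
  (forall t i j, 0 <= W t i j) -> forall s k i j, 0 <= Pm W s k i j.
Proof.
move=> W0 s k; elim: k => [|k IH] i j /=.
  by rewrite mxE; case: (i == j).
rewrite mxE; apply: sumr_ge0 => a _; exact: mulr_ge0.
Qed.

Lemma Pm_col (R : realType) n (W : nat -> 'M[R]_n) :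
  (forall t j, \sum_i W t i j = 1) -> forall s k j, \sum_i Pm W s k i j = 1.
Proof.
move=> W1 s k; elim: k => [|k IH] j /=.
  rewrite (bigD1 j) //= mxE eqxx big1 ?addr0 // => i Hi.
  by rewrite mxE (negbTE Hi).
under eq_bigr do rewrite mxE.
rewrite exchange_big /=.
under eq_bigr do rewrite -mulr_suml W1 mul1r.
exact: IH.
Qed.

Lemma Pm_split (R : realType) n (W : nat -> 'M[R]_n) s a b :
  Pm W s (a + b) = Pm W (s + a) b *m Pm W s a.
Proof.
elim: b => [|b IH]; first by rewrite addn0 mul1mx.
by rewrite addnS /= IH mulmxA addnA.
Qed.

Lemma Pm_edge (R : realType) n (W : nat -> 'M[R]_n) (beta : R) :
  (forall t i j, 0 <= W t i j) -> forall s k (a b j : 'I_n),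
  beta <= W (s + k)%N b a -> beta * Pm W s k a j <= Pm W s k.+1 b j.
Proof.
move=> W0 s k a b j Hb; rewrite PmS mxE (bigD1 a) //=.
apply: (@le_trans _ _ (W (s + k)%N b a * Pm W s k a j)).
  by apply: ler_wpM2r => //; exact: Pm_ge0.
rewrite lerDl; apply: sumr_ge0 => c _; apply: mulr_ge0 => //; exact: Pm_ge0.
Qed.

Lemma Pm_stay (R : realType) n (W : nat -> 'M[R]_n) (beta : R) :
  (forall t i j, 0 <= W t i j) -> (forall t i, beta <= W t i i) -> 0 <= beta ->
  forall s k r (i j : 'I_n), beta ^+ k <= Pm W s k i j ->
  beta ^+ (k + r) <= Pm W s (k + r) i j.
Proof.
move=> W0 Wd b0 s k r i j H; elim: r => [|r IH]; first by rewrite addn0.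
rewrite addnS exprS; apply: le_trans (@Pm_edge R n W beta W0 s (k+r) i i j (Wd _ i)).
exact: ler_wpM2l.
Qed.

Lemma connect_cross (T : finType) (e : rel T) (A : {set T}) a b :
  connect e a b -> a \in A -> b \notin A ->
  exists x y, [/\ e x y, x \in A & y \notin A].
Proof.
move/connectP => [p pth ->]; elim: p a pth => /= [|c p IH] a.
  by move=> _ Ha Hb; rewrite Ha in Hb.
move/andP => [eac pth] Ha Hb.
case Hc: (c \in A); first exact: (IH c pth Hc Hb).
by exists a, c; rewrite Hc.
Qed.

Lemma Pm_pos (R : realType) n (E : nat -> rel 'I_n) (W : nat -> 'M[R]_n) (beta : R) L :
  (forall t i j, 0 <= W t i j) -> (forall t i, beta <= W t i i) -> 0 <= beta ->
  (forall t (i j : 'I_n), E t j i -> beta <= W t i j) ->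
  (forall t, strongly_connected (union_rel E t L)) ->
  forall s (i j : 'I_n), beta ^+ (n * L) <= Pm W s (n * L) i j.
Proof.
move=> W0 Wd b0 Wedge conn s i j.
pose A q := [set x | beta ^+ (q * L) <= Pm W s (q * L) x j].
have stay0 : forall q, j \in A q.
  move=> q; rewrite inE.
  have := @Pm_stay R n W beta W0 Wd b0 s 0 (q * L) j j; rewrite add0n; apply.
  by rewrite expr0 /= mxE eqxx lexx.
have sub : forall q, A q \subset A q.+1.
  move=> q; apply/fintype.subsetP => x; rewrite !inE => Hx.
  by have := @Pm_stay R n W beta W0 Wd b0 s (q * L) L x j Hx; rewrite -mulSnr.
have grow : forall q, A q != [set: 'I_n] -> exists y, y \in A q.+1 /\ y \notin A q.
  move=> q Hq.
  have [b Hb] : exists b, b \notin A q.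
    case: (pickP (fun b => b \notin A q)) => [b Hb|H]; first by exists b.
    exfalso; move/negP: Hq; apply; apply/eqP/setP => x.
    have := H x => /= /negbFE ->; by rewrite finset.in_setT.
  have [x [y [Hxy Hx Hy]]] := connect_cross (conn (s + q * L)%N j b) (stay0 q) Hb.
  exists y; split => //.
  move: Hxy => /existsP [k Ek].
  rewrite inE.
  have Hx0 : beta ^+ (q * L) <= Pm W s (q * L) x j by move: Hx; rewrite inE.
  have Hx' := @Pm_stay R n W beta W0 Wd b0 s (q * L) k x j Hx0.
  have He : beta <= W (s + (q * L + k))%N y x by apply: Wedge; rewrite addnA.
  have Hy1 := @Pm_edge R n W beta W0 s (q * L + k) x y j He.
  have Hy2 : beta ^+ (q * L + k).+1 <= Pm W s (q * L + k).+1 y j.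
    by rewrite exprS; apply: le_trans Hy1; exact: ler_wpM2l.
  have := @Pm_stay R n W beta W0 Wd b0 s (q * L + k).+1 (L - k.+1) y j Hy2.
  have -> // : ((q * L + k).+1 + (L - k.+1) = q.+1 * L)%N.
  have := ltn_ord k; lia.
have card : forall q, (minn q.+1 n <= #|A q|)%N.
  elim => [|q IH].
    rewrite (leq_trans (geq_minl _ _)) // card_gt0; apply/set0Pn; exists j.
    exact: stay0.
  case: (A q =P [set: 'I_n]) => HA.
    have -> : A q.+1 = [set: 'I_n] by apply/eqP; rewrite finset.eqEsubset finset.subsetT /= -HA sub.
    by rewrite cardsT card_ord geq_minr.
  have [y [Hy1 Hy2]] := grow q (introN eqP HA).
  have Hp : A q \proper A q.+1 by apply/properP; split; [exact: sub | exists y].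
  have := proper_card Hp; lia.
have HA : A n = [set: 'I_n].
  apply/eqP; rewrite eqEcard finset.subsetT cardsT card_ord /=.
  by have := card n; rewrite (minn_idPr (leqnSn n)).
have : i \in A n by rewrite HA inE.
by rewrite inE.
Qed.

Lemma contract (R : realType) n (Q : 'M[R]_n) (d : 'I_n -> R) (delta : R) :
  (forall i a, delta <= Q i a) -> (forall a, \sum_i Q i a = 1) -> \sum_a d a = 0 ->
  \sum_i `|\sum_a Q i a * d a| <= (1 - n%:R * delta) * \sum_a `|d a|.
Proof.
move=> Qd Q1 d0.
have E i : \sum_a Q i a * d a = \sum_a (Q i a - delta) * d a.
  under [RHS]eq_bigr do rewrite mulrBl.
  by rewrite sumrB -mulr_sumr d0 mulr0 subr0.
apply: (@le_trans _ _ (\sum_i \sum_a (Q i a - delta) * `|d a|)).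
  apply: ler_sum => i _; rewrite E; apply: le_trans (ler_norm_sum _ _ _) _.
  apply: ler_sum => a _; rewrite normrM ger0_norm // subr_ge0; exact: Qd.
rewrite exchange_big /= mulr_sumr; apply: ler_sum => a _.
by rewrite -mulr_suml sumrB Q1 sumr_const card_ord mulr_natl.
Qed.

Lemma contractM (R : realType) n (Q M : 'M[R]_n) (delta : R) j l :
  (forall i a, delta <= Q i a) -> (forall a, \sum_i Q i a = 1) ->
  \sum_a M a j = \sum_a M a l ->
  \sum_i `|(Q *m M) i j - (Q *m M) i l| <= (1 - n%:R * delta) * \sum_a `|M a j - M a l|.
Proof.
move=> Qd Q1 Ms.
have -> : \sum_i `|(Q *m M) i j - (Q *m M) i l| = \sum_i `|\sum_a Q i a * (M a j - M a l)|.
  apply: eq_bigr => i _; rewrite !mxE -sumrB.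
  by under eq_bigr do rewrite -mulrBr.
apply: contract => //; by rewrite sumrB Ms subrr.
Qed.

Definition Dv (R : realType) n (W : nat -> 'M[R]_n) s k (j l : 'I_n) :=
  \sum_a `|Pm W s k a j - Pm W s k a l|.

Lemma Dv_mono (R : realType) n (W : nat -> 'M[R]_n) :
  (forall t i j, 0 <= W t i j) -> (forall t j, \sum_i W t i j = 1) ->
  forall s k r j l, Dv W s (k + r) j l <= Dv W s k j l.
Proof.
move=> W0 W1 s k r j l; elim: r => [|r IH]; first by rewrite addn0.
apply: le_trans IH; rewrite /Dv addnS PmS.
have := @contractM R n (W (s + (k + r))%N) (Pm W s (k + r)) 0 j l (fun i a => W0 _ i a) (W1 _).
by rewrite mulr0 subr0 mul1r !(Pm_col W1); apply.
Qed.

Lemma Dv_le2 (R : realType) n (W : nat -> 'M[R]_n) :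
  (forall t i j, 0 <= W t i j) -> (forall t j, \sum_i W t i j = 1) ->
  forall s k j l, Dv W s k j l <= 2.
Proof.
move=> W0 W1 s k j l; rewrite /Dv.
apply: le_trans (_ : \sum_a (`|Pm W s k a j| + `|Pm W s k a l|) <= _).
  apply: ler_sum => a _; exact: ler_normB.
rewrite big_split /=.
under eq_bigr do rewrite ger0_norm ?(Pm_ge0 W0) //.
under [X in _ + X]eq_bigr do rewrite ger0_norm ?(Pm_ge0 W0) //.
by rewrite !(Pm_col W1).
Qed.

Lemma Dv_block (R : realType) n (E : nat -> rel 'I_n) (W : nat -> 'M[R]_n) (beta : R) L :
  (forall t i j, 0 <= W t i j) -> (forall t i, beta <= W t i i) -> 0 <= beta ->
  (forall t (i j : 'I_n), E t j i -> beta <= W t i j) ->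
  (forall t, strongly_connected (union_rel E t L)) ->
  (forall t j, \sum_i W t i j = 1) ->
  forall s k j l, Dv W s (k + n * L) j l <= (1 - n%:R * beta ^+ (n * L)) * Dv W s k j l.
Proof.
move=> W0 Wd b0 Wedge conn W1 s k j l; rewrite /Dv Pm_split.
apply: contractM.
- move=> i a; exact: (Pm_pos W0 Wd b0 Wedge conn).
- move=> a; exact: (Pm_col W1).
- by rewrite !(Pm_col W1).
Qed.

Lemma Dv_geom (R : realType) n (E : nat -> rel 'I_n) (W : nat -> 'M[R]_n) (beta : R) L :
  (forall t i j, 0 <= W t i j) -> (forall t i, beta <= W t i i) -> 0 <= beta ->
  (forall t (i j : 'I_n), E t j i -> beta <= W t i j) ->
  (forall t, strongly_connected (union_rel E t L)) ->
  (forall t j, \sum_i W t i j = 1) ->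
  0 <= 1 - n%:R * beta ^+ (n * L) ->
  forall s q j l, Dv W s (q * (n * L)) j l <= (1 - n%:R * beta ^+ (n * L)) ^+ q * 2.
Proof.
move=> W0 Wd b0 Wedge conn W1 c0 s q j l; elim: q => [|q IH].
  by rewrite mul0n expr0 mul1r (Dv_le2 W0 W1).
rewrite mulSnr; apply: le_trans (Dv_block W0 Wd b0 Wedge conn W1 _ _ _ _) _.
by rewrite exprS -mulrA; apply: ler_wpM2l.
Qed.

Lemma y_ge0 (R : realType) n (W : nat -> 'M[R]_n) :
  (forall t i j, 0 <= W t i j) -> forall t i, 0 <= ypush W t i ord0.
Proof.
move=> W0; elim => [|t IH] i /=; first by rewrite mxE ler01.
rewrite mxE; apply: sumr_ge0 => a _; exact: mulr_ge0.
Qed.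

Lemma y_sum (R : realType) n (W : nat -> 'M[R]_n) :
  (forall t j, \sum_i W t i j = 1) -> forall t, \sum_i ypush W t i ord0 = n%:R.
Proof.
move=> W1; elim => [|t IH] /=.
  under eq_bigr do rewrite mxE.
  by rewrite sumr_const card_ord.
under eq_bigr do rewrite mxE.
rewrite exchange_big /=.
under eq_bigr do rewrite -mulr_suml W1 mul1r.
exact: IH.
Qed.

Lemma y_pos (R : realType) n (W : nat -> 'M[R]_n) (beta : R) :
  (forall t i j, 0 <= W t i j) -> (forall t i, beta <= W t i i) -> 0 <= beta ->
  forall t i, beta ^+ t <= ypush W t i ord0.
Proof.
move=> W0 Wd b0; elim => [|t IH] i /=; first by rewrite mxE expr0.
rewrite mxE (bigD1 i) //= exprS.
apply: (@le_trans _ _ (W t i i * ypush W t i ord0)).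
  apply: le_trans (_ : beta * ypush W t i ord0 <= _).
    exact: ler_wpM2l.
  apply: ler_wpM2r => //; exact: (y_ge0 W0).
rewrite lerDl; apply: sumr_ge0 => c _; apply: mulr_ge0 => //; exact: (y_ge0 W0).
Qed.

Lemma y_Pm (R : realType) n (W : nat -> 'M[R]_n) s k :
  ypush W (s + k) = Pm W s k *m ypush W s.
Proof.
elim: k => [|k IH]; first by rewrite addn0 mul1mx.
by rewrite addnS /= IH mulmxA.
Qed.

Lemma y_lb (R : realType) n (E : nat -> rel 'I_n) (W : nat -> 'M[R]_n) (beta : R) L :
  (forall t i j, 0 <= W t i j) -> (forall t i, beta <= W t i i) -> 0 <= beta ->
  (forall t (i j : 'I_n), E t j i -> beta <= W t i j) ->
  (forall t, strongly_connected (union_rel E t L)) ->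
  (forall t j, \sum_i W t i j = 1) ->
  forall s i, n%:R * beta ^+ (n * L) <= ypush W (s + n * L) i ord0.
Proof.
move=> W0 Wd b0 Wedge conn W1 s i; rewrite y_Pm mxE.
apply: le_trans (_ : \sum_a beta ^+ (n * L) * ypush W s a ord0 <= _).
  by rewrite -mulr_sumr (y_sum W1) mulrC.
apply: ler_sum => a _; apply: ler_wpM2r; first exact: (y_ge0 W0).
exact: (Pm_pos W0 Wd b0 Wedge conn).
Qed.

Lemma SprodS (R : realType) n (W : nat -> 'M[R]_n) tau k :
  Sprod W tau k.+1 = Smat W (tau + k.+1) *m Sprod W tau k.
Proof. by []. Qed.

Lemma SmatE (R : realType) n (W : nat -> 'M[R]_n) t i j :
  Smat W t i j = W t i j * ypush W t j ord0 / ypush W t.+1 i ord0.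
Proof. exact: mxE. Qed.

Lemma PmSE (R : realType) n (W : nat -> 'M[R]_n) s k i j :
  Pm W s k.+1 i j = \sum_a W (s + k)%N i a * Pm W s k a j.
Proof. exact: mxE. Qed.

Lemma Sprod_formula (R : realType) n (W : nat -> 'M[R]_n) :
  (forall t i, 0 < ypush W t i ord0) ->
  forall tau k i j, Sprod W tau k i j =
    Pm W tau k.+1 i j * ypush W tau j ord0 / ypush W (tau + k.+1) i ord0.
Proof.
move=> ypos tau k; elim: k => [|k IH] i j.
  by rewrite /= /Smat mxE mulmx1 addn0 addn1.
rewrite SprodS mxE.
under eq_bigr => a _ do rewrite IH SmatE.
rewrite PmSE -!mulrA mulr_suml addnS.
apply: eq_bigr => a _.
have ha : ypush W (tau + k.+1) a ord0 != 0 by rewrite gt_eqF.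
have hi : ypush W (tau + k.+1).+1 i ord0 != 0 by rewrite gt_eqF.
rewrite !addnS in ha hi *; field; by rewrite hi ha.
Qed.

Local Open Scope classical_set_scope.

Theorem lemma4 (R : realType) (n : nat) (E : nat -> rel 'I_n)
  (W : nat -> 'M[R]_n) (beta : R) :
  (forall t (i : 'I_n), E t i i) ->
  (forall t (i j : 'I_n), E t j i -> 0 < W t i j) ->
  (forall t (i j : 'I_n), ~~ E t j i -> W t i j = 0) ->
  0 < beta ->
  (forall t (i j : 'I_n), E t j i -> beta <= W t i j) ->
  (forall t (i : 'I_n), \sum_(j | E t i j) W t j i = 1) ->
  uniformly_strongly_connected E ->
  forall (tau : nat) (i j : 'I_n),
    (fun k : nat => Sprod W tau k i j) @ \oo --> (n%:R)^-1 * ypush W tau j ord0.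
Proof.
move=> Hself Wpos Wzero b0 Wedge Wcol [L [L0 conn]] tau i j.
have W0 : forall t (a b : 'I_n), 0 <= W t a b.
  move=> t a b; case: (boolP (E t b a)) => h; first exact: ltW (Wpos _ _ _ h).
  by rewrite Wzero.
have Wd : forall t (a : 'I_n), beta <= W t a a := fun t a => Wedge t a a (Hself t a).
have W1 : forall t (a : 'I_n), \sum_b W t b a = 1.
  move=> t a; rewrite -(Wcol t a) [RHS]big_mkcond /=; apply: eq_bigr => b _.
  by case: ifP => // /negbT h; exact: Wzero.
have b0' : 0 <= beta := ltW b0.
have n0 : (0 < n)%N := leq_ltn_trans (leq0n i) (ltn_ord i).
have nR0 : 0 < n%:R :> R by rewrite ltr0n.
set m := (n * L)%N.
set d := beta ^+ m.
have d0 : 0 < d := exprn_gt0 _ b0.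
have nd1 : n%:R * d <= 1.
  rewrite -[X in _ <= X](Pm_col W1 0 m i).
  apply: le_trans (_ : \sum_(a : 'I_n) d <= _).
    by rewrite sumr_const card_ord mulr_natl.
  apply: ler_sum => a _; exact: (Pm_pos W0 Wd b0' Wedge conn).
set c := 1 - n%:R * d.
have c0 : 0 <= c by rewrite subr_ge0.
have c1 : c < 1.
  have : 0 < n%:R * d by rewrite mulr_gt0.
  rewrite /c; lra.
have ypos : forall t a, 0 < ypush W t a ord0.
  move=> t a; exact: lt_le_trans (exprn_gt0 t b0) (y_pos W0 Wd b0' t a).
set Y := ypush W tau j ord0.
have Y0 : 0 < Y := ypos tau j.
apply/cvgrPdist_le => e e0.
have hc : `|c| < 1 by rewrite ger0_norm.
have th : 0 < e * d / (2 * Y) by rewrite divr_gt0 ?mulr_gt0.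
have := cvg_expr hc; move/cvgrPdist_le => /(_ _ th) [N _ HN].
have hq := HN N (leqnn N).
rewrite /= sub0r normrN ger0_norm ?exprn_ge0 // ler_pdivlMr ?mulr_gt0 // in hq.
exists (N * m + m)%N => // k /= hk.
rewrite (Sprod_formula ypos).
set P := Pm W tau k.+1.
set z := ypush W (tau + k.+1) i ord0.
have zE : z = \sum_l P i l * ypush W tau l ord0 by rewrite /z y_Pm mxE.
have zlb : n%:R * d <= z.
  have := y_lb W0 Wd b0' Wedge conn W1 (tau + k.+1 - m) i.
  have hm : (m <= tau + k.+1)%N.
    exact: leq_trans (leq_addl _ _) (leq_trans hk (leq_trans (leqnSn k) (leq_addl tau k.+1))).
  by rewrite subnK.
have z0 : 0 < z := lt_le_trans (mulr_gt0 nR0 d0) zlb.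
have hD : forall l, Dv W tau k.+1 l j <= c ^+ N * 2.
  move=> l; have := Dv_mono W0 W1 tau (N * m) (k.+1 - N * m) l j.
  rewrite subnKC; last exact: leq_trans (leq_addr m (N * m)) (leq_trans hk (leqnSn k)).
  move/le_trans; apply; exact: (Dv_geom W0 Wd b0' Wedge conn W1 c0).
have hdiff : `|z - n%:R * P i j| <= n%:R * (n%:R * (c ^+ N * 2)).
  have -> : n%:R * P i j = \sum_l P i j * ypush W tau l ord0.
    by rewrite -mulr_sumr (y_sum W1) mulrC.
  rewrite zE -sumrB.
  apply: le_trans (ler_norm_sum _ _ _) _.
  apply: le_trans (_ : \sum_(l : 'I_n) ((c ^+ N * 2) * n%:R) <= _).
    apply: ler_sum => l _.
    rewrite -mulrBl normrM (ger0_norm (ltW (ypos tau l))).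
    apply: ler_pM; [exact: normr_ge0 | exact: ltW (ypos tau l) | | ].
      apply: (le_trans _ (hD l)).
      rewrite /Dv (bigD1 i) //= lerDl; exact: sumr_ge0.
    rewrite -(y_sum W1 tau) (bigD1 l) //= lerDl; apply: sumr_ge0 => a _.
    exact: ltW (ypos tau a).
  by rewrite sumr_const card_ord -[_ *+ n]mulr_natl [c ^+ N * 2 * _]mulrC.
have -> : n%:R^-1 * Y - P i j * Y / z = Y * (z - n%:R * P i j) / (n%:R * z).
  by field; rewrite gt_eqF // gt_eqF.
rewrite normrM normfV !normrM (ger0_norm (ltW Y0)) (ger0_norm (ltW nR0)) (ger0_norm (ltW z0)).
rewrite ler_pdivrMr ?mulr_gt0 //.
apply: le_trans (_ : Y * (n%:R * (n%:R * (c ^+ N * 2))) <= _).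
  apply: ler_wpM2l; [exact: ltW | exact: hdiff].
have -> : Y * (n%:R * (n%:R * (c ^+ N * 2))) = (n%:R * n%:R) * (c ^+ N * (2 * Y)) by ring.
apply: le_trans (_ : (n%:R * n%:R) * (e * d) <= _).
  by apply: ler_wpM2l => //; rewrite mulr_ge0 // ltW.
have -> : n%:R * n%:R * (e * d) = e * (n%:R * (n%:R * d)) by ring.
apply: ler_wpM2l; first exact: ltW.
apply: ler_wpM2l; first exact: ltW.
exact: zlb.
Qed.
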